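(* Let $0<\epsilon<1/2$, let $C=1-h(\epsilon)$ with $h(\epsilon)=-\epsilon\log_2\epsilon-(1-\epsilon)\log_2(1-\epsilon)$, let $0<R<C$ and $0<\rho<1$ be fixed, and set $k=k(n)=\lfloor Rn\rfloor$. If $\mathbf{A}$ is a random $n\times k$ binary matrix with the Bernoulli$(n,k,\rho)$ distribution, then \[ \lim_{n\to\infty}\mathbb{E}_{\mathbf{A}}\big(p_c(\mathbf{A})\big)=1 . \]
   Context: All arithmetic on binary vectors and matrices is in $\mathrm{GF}(2)$. A binary linear code with generating matrix $\mathbf{A}\in\{0,1\}^{n\times k}$ encodes a message $X\in\{0,1\}^k$ as $\mathbf{A}X\in\{0,1\}^n$. Over the binary symmetric channel (BSC) with cross-over probability $\epsilon$, the channel output is $Y=\mathbf{A}X+N$, where $X$ is uniformly distributed on $\{0,1\}^k$ and $N\in\{0,1\}^n$ has i.i.d. Bernoulli$(\epsilon)$ entries, independent of $X$. The decoder, on receiving $Y=y$, outputs a random estimate $\hat X$ drawn from the posterior distribution $\mathbb{P}(X=\cdot\mid Y=y)$. Its probability of correct detection is $p_c(\mathbf{A})=\mathbb{E}_{X,Y}\big[\mathbb{P}(X\mid Y)\big]$, and $p_e(\mathbf{A})=1-p_c(\mathbf{A})$. The Bernoulli$(n,k,\rho)$ distribution on the set $\mathcal{A}_{n\times k}$ of binary $n\times k$ matrices is the one in which all entries are i.i.d. Bernoulli$(\rho)$. *)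

(* Defs.v *)
From Stdlib Require Import Reals.
From mathcomp Require Import all_boot.
Set Implicit Arguments. Unset Strict Implicit. Unset Printing Implicit Defensive.

Local Open Scope R_scope.

Definition bvec (n : nat) := {ffun 'I_n -> bool}.
Definition bmat (n k : nat) := {ffun 'I_n * 'I_k -> bool}.

Definition Rsum (T : finType) (f : T -> R) : R := \big[Rplus/0]_(t : T) f t.
Definition Rprod (T : finType) (f : T -> R) : R := \big[Rmult/1]_(t : T) f t.

Definition encode (n k : nat) (A : bmat n k) (x : bvec k) : bvec n :=
  [ffun i => \big[addb/false]_(j : 'I_k) (A (i, j) && x j)].
Definition vadd (n : nat) (u v : bvec n) : bvec n := [ffun i => addb (u i) (v i)].

Definition bern (p : R) (b : bool) : R := if b then p else 1 - p.

Definition noise_prob (eps : R) (n : nat) (e : bvec n) : R :=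
  Rprod (fun i : 'I_n => bern eps (e i)).

(* joint law P(X = x, Y = y) with X uniform on {0,1}^k, Y = A X + N *)
Definition joint (eps : R) (n k : nat) (A : bmat n k) (x : bvec k) (y : bvec n) : R :=
  / (2 ^ k) * noise_prob eps (vadd y (encode A x)).

Definition out_prob (eps : R) (n k : nat) (A : bmat n k) (y : bvec n) : R :=
  Rsum (fun x : bvec k => joint eps A x y).

Definition posterior (eps : R) (n k : nat) (A : bmat n k) (x : bvec k) (y : bvec n) : R :=
  joint eps A x y / out_prob eps A y.

Definition p_c (eps : R) (n k : nat) (A : bmat n k) : R :=
  Rsum (fun x : bvec k => Rsum (fun y : bvec n =>
    joint eps A x y * posterior eps A x y)).

Definition mat_prob (rho : R) (n k : nat) (A : bmat n k) : R :=
  Rprod (fun ij : 'I_n * 'I_k => bern rho (A ij)).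

Definition avg_pc (eps rho : R) (n k : nat) : R :=
  Rsum (fun A : bmat n k => mat_prob rho A * p_c eps A).

Definition log2 (x : R) : R := ln x / ln 2.
Definition h2 (eps : R) : R := - eps * log2 eps - (1 - eps) * log2 (1 - eps).
Definition capacity (eps : R) : R := 1 - h2 eps.

Definition kfloor (Rt : R) (n : nat) : nat := Z.to_nat (Int_part (Rt * INR n)).

(* Main.v *)
Require Import Defs.
From Stdlib Require Import Reals Lra Classical ZArith.
From HB Require Import structures.
From mathcomp Require Import all_boot.
Local Open Scope R_scope.

Set Implicit Arguments. Unset Strict Implicit.
HB.instance Definition _ := Monoid.isComLaw.Build R 0 Rplus (fun x y z => esym (Rplus_assoc x y z)) Rplus_comm Rplus_0_l.
HB.instance Definition _ := Monoid.isComLaw.Build R 1 Rmult (fun x y z => esym (Rmult_assoc x y z)) Rmult_comm Rmult_1_l.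
HB.instance Definition _ := Monoid.isMulLaw.Build R 0 Rmult Rmult_0_l Rmult_0_r.
HB.instance Definition _ := Monoid.isAddLaw.Build R Rmult Rplus Rmult_plus_distr_r Rmult_plus_distr_l.

Lemma Rsum_le (T : finType) (f g : T -> R) :
  (forall t, f t <= g t) -> Rsum f <= Rsum g.
Proof. move=> H; rewrite /Rsum; elim/big_ind2: _ => //; [lra| move=> *; lra]. Qed.

Lemma Rsum_ge0 (T : finType) (f : T -> R) : (forall t, 0 <= f t) -> 0 <= Rsum f.
Proof. move=> H; rewrite /Rsum; elim/big_ind: _ => //; [lra| move=> *; lra]. Qed.

Lemma Rprod_gt0 (T : finType) (f : T -> R) : (forall t, 0 < f t) -> 0 < Rprod f.
Proof. move=> H; rewrite /Rprod; elim/big_ind: _ => //; [lra| move=> *; nra]. Qed.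

Lemma Rprod_ge0 (T : finType) (f : T -> R) : (forall t, 0 <= f t) -> 0 <= Rprod f.
Proof. move=> H; rewrite /Rprod; elim/big_ind: _ => //; [lra| move=> *; nra]. Qed.

Lemma Rsum_plus (T : finType) (f g : T -> R) : Rsum (fun t => f t + g t) = Rsum f + Rsum g.
Proof. by rewrite /Rsum big_split. Qed.

Lemma Rsum_scal (T : finType) (a : R) (f : T -> R) : Rsum (fun t => a * f t) = a * Rsum f.
Proof. by rewrite /Rsum big_distrr. Qed.

Lemma Rsum_ext (T : finType) (f g : T -> R) : (forall t, f t = g t) -> Rsum f = Rsum g.
Proof. by move=> H; rewrite /Rsum; apply: eq_bigr. Qed.

Lemma Rsum_swap (T U : finType) (f : T -> U -> R) :
  Rsum (fun t => Rsum (fun u => f t u)) = Rsum (fun u => Rsum (fun t => f t u)).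
Proof. by rewrite /Rsum exchange_big. Qed.

Lemma Rsum_const (T : finType) (c : R) : Rsum (fun _ : T => c) = INR #|T| * c.
Proof.
rewrite /Rsum big_const; elim: #|T| => [|m IH]; first by rewrite /= Rmult_0_l.
by rewrite iterS IH S_INR; ring.
Qed.

Lemma Rprod_const n (c : R) : Rprod (fun _ : 'I_n => c) = c ^ n.
Proof.
rewrite /Rprod big_const card_ord; elim: n => [|m IH] //=; by rewrite IH.
Qed.

Lemma Rsum_bigD1 (T : finType) (t0 : T) (f : T -> R) :
  Rsum f = f t0 + Rsum (fun t => if t == t0 then 0 else f t).
Proof.
rewrite /Rsum (bigD1 t0) //=; congr (_ + _).
rewrite [in RHS](bigD1 t0) //= eqxx Rplus_0_l; apply: eq_bigr => t /negbTE ->//.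
Qed.

Lemma Rsum_term_le (T : finType) (t0 : T) (f : T -> R) :
  (forall t, 0 <= f t) -> f t0 <= Rsum f.
Proof.
move=> H; rewrite (Rsum_bigD1 t0).
have : 0 <= Rsum (fun t => if t == t0 then 0 else f t).
  by apply: Rsum_ge0 => t; case: (t == t0) => //; lra.
lra.
Qed.

Lemma sum_ffun_prod (I : finType) (f : I -> bool -> R) :
  Rsum (fun v : {ffun I -> bool} => Rprod (fun i => f i (v i)))
  = Rprod (fun i => f i true + f i false).
Proof.
rewrite /Rsum /Rprod; symmetry.
rewrite (eq_bigr (fun i => \big[Rplus/0]_(b:bool) f i b)); last by move=> i _; rewrite big_bool.
by rewrite bigA_distr_bigA.
Qed.

Lemma sum_ffun_prodT (I J : finType) (f : I -> J -> R) :
  Rsum (fun v : {ffun I -> J} => Rprod (fun i => f i (v i)))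
  = Rprod (fun i => Rsum (f i)).
Proof. by rewrite /Rsum /Rprod bigA_distr_bigA. Qed.

Definition cnt n (v : bvec n) : nat := #|[pred i | v i]|.

Lemma prod_if_cnt n (v : bvec n) (a : R) :
  Rprod (fun i => if v i then a else 1) = a ^ cnt v.
Proof.
rewrite /Rprod -big_mkcond /= big_const /cnt.
elim: #|_| => [|m IH] //=; by rewrite IH.
Qed.

Lemma Rprod_mult (T : finType) (f g : T -> R) : Rprod (fun t => f t * g t) = Rprod f * Rprod g.
Proof. by rewrite /Rprod big_split. Qed.

Lemma card_bvec k : #|{: bvec k}| = (2 ^ k)%N.
Proof. by rewrite /bvec card_ffun card_bool card_ord. Qed.

Lemma INR_exp2 k : INR (2 ^ k)%N = 2 ^ k.
Proof. elim: k => [|k IH] //; rewrite expnS mult_INR IH //. Qed.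

Set Implicit Arguments. Unset Strict Implicit.

Lemma one_bad (T : finType) (pi B : T -> R) :
  (forall x, 0 <= pi x) -> Rsum pi = 1 -> (forall x, 0 <= B x) ->
  (forall x1 x2, x1 <> x2 -> 1 <= B x1 \/ 1 <= B x2) ->
  1 - Rsum (fun x => pi x * pi x) <= 2 * Rsum (fun x => pi x * B x).
Proof.
move=> Hp Hs HB Hpair.
have Hsq : 0 <= Rsum (fun x => pi x * pi x) by apply: Rsum_ge0 => x; nra.
case: (classic (exists x0, B x0 < 1)) => [[x0 Hx0]|Hno].
- have Hoth : forall x, x <> x0 -> 1 <= B x.
    move=> x Hx; case: (Hpair x0 x) => //; [by move=> E; apply: Hx | lra].
  have Hp0 : pi x0 <= 1 by rewrite -Hs; apply: Rsum_term_le.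
  have Hsq0 : pi x0 * pi x0 <= Rsum (fun x => pi x * pi x).
    have := Rsum_term_le x0 (f:=fun x => pi x * pi x); apply => x; nra.
  have E1 := Rsum_bigD1 x0 pi.
  have E2 := Rsum_bigD1 x0 (fun x => pi x * B x).
  have Hle : Rsum (fun t => if t == x0 then 0 else pi t)
          <= Rsum (fun t => if t == x0 then 0 else pi t * B t).
    apply: Rsum_le => t; case: eqP => [_|/Hoth Ht]; first lra.
    have := Hp t; nra.
  have := Hp x0; have := HB x0; nra.
- have Hall : forall x, 1 <= B x.
    by move=> x; apply: Rnot_lt_le => H; apply: Hno; exists x.
  have : Rsum pi <= Rsum (fun x => pi x * B x).
    by apply: Rsum_le => x; have := Hp x; have := Hall x; nra.
  lra.
Qed.

Lemma Rsum_minus (T : finType) (f g : T -> R) : Rsum f - Rsum g = Rsum (fun t => f t - g t).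
Proof.
rewrite /Rminus -(Rmult_1_l (Rsum g)) Ropp_mult_distr_l -Rsum_scal -Rsum_plus.
apply: Rsum_ext => t; ring.
Qed.

Section PC.
Variables (eps : R) (n k : nat).
Hypothesis heps0 : 0 < eps.
Hypothesis heps1 : eps < 1.

Lemma bern_pos p b : 0 < p -> p < 1 -> 0 < bern p b.
Proof. by case: b => /= *; lra. Qed.

Lemma noise_pos m (e : bvec m) : 0 < noise_prob eps e.
Proof. by apply: Rprod_gt0 => i; apply: bern_pos. Qed.

Lemma bern_sum p : bern p true + bern p false = 1.
Proof. rewrite /=; ring. Qed.

Lemma Rprod_one (T : finType) : Rprod (fun _ : T => 1) = 1.
Proof. by rewrite /Rprod big1. Qed.

Lemma sum_noise m : Rsum (fun e : bvec m => noise_prob eps e) = 1.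
Proof.
rewrite /noise_prob (sum_ffun_prod (fun i b => bern eps b)).
rewrite -(Rprod_one 'I_m) /Rprod; apply: eq_bigr => i _; exact: bern_sum.
Qed.

Lemma vadd_invol m (v c : bvec m) : vadd (vadd v c) c = v.
Proof. by apply/ffunP => i; rewrite !ffunE addbK. Qed.

Lemma sum_vadd m (c : bvec m) (f : bvec m -> R) :
  Rsum (fun v => f (vadd v c)) = Rsum f.
Proof.
rewrite /Rsum [RHS](reindex (fun v => vadd v c)) //.
by exists (fun v => vadd v c) => v _; apply: vadd_invol.
Qed.

Variable A : bmat n k.

Lemma joint_ge0 x y : 0 <= joint eps A x y.
Proof.
rewrite /joint; apply: Rmult_le_pos; last exact/Rlt_le/noise_pos.
by apply/Rlt_le/Rinv_0_lt_compat/pow_lt; lra.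
Qed.

Lemma joint_pos x y : 0 < joint eps A x y.
Proof.
rewrite /joint; apply: Rmult_lt_0_compat; last exact/noise_pos.
by apply/Rinv_0_lt_compat/pow_lt; lra.
Qed.

Lemma out_pos y : 0 < out_prob eps A y.
Proof.
apply: (Rlt_le_trans _ (joint eps A [ffun=> false] y)); first exact: joint_pos.
apply: (Rsum_term_le [ffun=> false] (f:=fun x => joint eps A x y)) => x.
exact: joint_ge0.
Qed.

Lemma joint_sum_y x : Rsum (fun y => joint eps A x y) = / 2 ^ k.
Proof.
rewrite /joint Rsum_scal (sum_vadd (encode A x) (fun e => noise_prob eps e)).
by rewrite sum_noise Rmult_1_r.
Qed.

Lemma joint_total : Rsum (fun x => Rsum (fun y => joint eps A x y)) = 1.
Proof.
rewrite (Rsum_ext joint_sum_y) Rsum_const card_bvec INR_exp2.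
field; apply: pow_nonzero; lra.
Qed.

Lemma pc_bound (B : bvec k -> bvec n -> R) :
  (forall x y, 0 <= B x y) ->
  (forall y x1 x2, x1 <> x2 -> 1 <= B x1 y \/ 1 <= B x2 y) ->
  1 - p_c eps A <= 2 * Rsum (fun x => Rsum (fun y => joint eps A x y * B x y)).
Proof.
move=> HB Hpair.
rewrite -joint_total /p_c !(Rsum_swap (T:=bvec k) (U:=bvec n)).
rewrite -Rsum_scal Rsum_minus.
apply: Rsum_le => y.
have Ho := out_pos y; rewrite /out_prob in Ho.
remember (Rsum (fun x => joint eps A x y)) as o eqn:Eo; rewrite -Eo in Ho.
pose pi x := joint eps A x y / o.
have Hpi : Rsum pi = 1.
  by rewrite /pi /Rdiv (Rsum_ext (fun x => Rmult_comm _ _)) Rsum_scal -Eo; field; lra.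
have H1 := one_bad (pi := pi) (B := fun x => B x y) _ Hpi (fun x => HB x y) (Hpair y).
have Hpi0 : forall x, 0 <= pi x.
  by move=> x; rewrite /pi /Rdiv; apply: Rmult_le_pos; [exact: joint_ge0| apply/Rlt_le/Rinv_0_lt_compat].
have {}H1 : 1 - Rsum (T:=bvec k) (fun x => pi x * pi x) <= 2 * Rsum (T:=bvec k) (fun x => pi x * B x y) := H1 Hpi0.
have E1 : Rsum (fun x => joint eps A x y * posterior eps A x y) = o * Rsum (fun x => pi x * pi x).
  rewrite -Rsum_scal; apply: Rsum_ext => x; rewrite /posterior /pi /out_prob -Eo; field; lra.
have E2 : Rsum (fun x => joint eps A x y * B x y) = o * Rsum (fun x => pi x * B x y).
  rewrite -Rsum_scal; apply: Rsum_ext => x; rewrite /pi; field; lra.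
rewrite E1 E2.
have H2 := Rmult_le_compat_l o _ _ (Rlt_le _ _ Ho) H1.
rewrite Rmult_minus_distr_l Rmult_1_r -Rmult_assoc (Rmult_comm o 2) Rmult_assoc in H2.
have -> : Rsum (T:=bvec k) (fun x => joint eps A x y) = o by rewrite Eo.
exact H2.
Qed.

End PC.

Set Implicit Arguments. Unset Strict Implicit.

Lemma exp_pow_nat (a : R) (w : nat) : exp a ^ w = exp (INR w * a).
Proof.
elim: w => [|w IH]; first by rewrite /= Rmult_0_l exp_0.
rewrite S_INR /= IH -exp_plus; f_equal; ring.
Qed.

Definition EE1 n (lam T : R) (v : bvec n) : R :=
  exp (- lam * T) * Rprod (fun i => if v i then exp lam else 1).
Definition phi (m : R) (b : bool) : R := if b then m else 1.
Definition EE2 n (mu T : R) (v : bvec n) : R :=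
  exp (mu * T) * Rprod (fun i => phi (exp (- mu)) (v i)).

Lemma E1_eq n lam T (v : bvec n) : EE1 lam T v = exp (lam * (INR (cnt v) - T)).
Proof. by rewrite /EE1 prod_if_cnt exp_pow_nat -exp_plus; f_equal; ring. Qed.

Lemma E2_eq n mu T (v : bvec n) : EE2 mu T v = exp (mu * (T - INR (cnt v))).
Proof.
rewrite /EE2 /phi.
by rewrite prod_if_cnt exp_pow_nat -exp_plus; f_equal; ring.
Qed.

Lemma E1_pos n lam T (v : bvec n) : 0 < EE1 lam T v.
Proof. rewrite E1_eq; exact: exp_pos. Qed.
Lemma E2_pos n mu T (v : bvec n) : 0 < EE2 mu T v.
Proof. rewrite E2_eq; exact: exp_pos. Qed.

Lemma exp_lt1 x : exp x < 1 -> x < 0.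
Proof. rewrite -exp_0 => H; apply: exp_lt_inv H. Qed.

Lemma E1_thr n lam T (v : bvec n) : 0 < lam -> EE1 lam T v < 1 -> INR (cnt v) < T.
Proof. move=> Hl; rewrite E1_eq => /exp_lt1 H; nra. Qed.
Lemma E2_thr n mu T (v : bvec n) : 0 < mu -> EE2 mu T v < 1 -> T < INR (cnt v).
Proof. move=> Hl; rewrite E2_eq => /exp_lt1 H; nra. Qed.

Section BDef.
Variables (n k : nat) (lam muh mul T : R) (W0 : nat).
Hypothesis hlam : 0 < lam.
Hypothesis hmuh : 0 < muh.
Hypothesis hmul : 0 < mul.

Definition mu_of (d : bvec k) : R := if (W0 <= cnt d)%N then muh else mul.

Definition Bfun (A : bmat n k) (x : bvec k) (y : bvec n) : R :=
  EE1 lam T (vadd y (encode A x)) +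
  Rsum (fun x' => if x' == x then 0 else EE2 (mu_of (vadd x x')) T (vadd y (encode A x'))).

Lemma mu_of_pos d : 0 < mu_of d.
Proof. by rewrite /mu_of; case: ifP. Qed.

Lemma Bfun_ge0 A x y : 0 <= Bfun A x y.
Proof.
rewrite /Bfun; apply: Rplus_le_le_0_compat; first exact/Rlt_le/E1_pos.
apply: Rsum_ge0 => x'; case: eqP => _; [lra| exact/Rlt_le/E2_pos].
Qed.

Lemma Bfun_pair A y x1 x2 : x1 <> x2 -> 1 <= Bfun A x1 y \/ 1 <= Bfun A x2 y.
Proof.
move=> Hne; apply: NNPP => /not_or_and [/Rnot_le_lt H1 /Rnot_le_lt H2].
have HS : forall x, 0 <= Rsum (fun x' => if x' == x then 0 else EE2 (mu_of (vadd x x')) T (vadd y (encode A x'))).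
  by move=> x; apply: Rsum_ge0 => x'; case: eqP => _; [lra| exact/Rlt_le/E2_pos].
have Ha : EE1 lam T (vadd y (encode A x1)) < 1.
  by move: H1; rewrite /Bfun; have := HS x1; lra.
have Hb : EE2 (mu_of (vadd x2 x1)) T (vadd y (encode A x1)) < 1.
  move: H2; rewrite /Bfun; apply: Rle_lt_trans.
  apply: Rle_trans (Rplus_le_compat_l _ _ _ (Rsum_term_le x1 (f := fun x' => if x' == x2 then 0 else EE2 (mu_of (vadd x2 x')) T (vadd y (encode A x'))) _)) .
    have : x1 == x2 = false by apply/eqP.
    move=> ->; have := E1_pos lam T (vadd y (encode A x2)); lra.
  by move=> x'; case: eqP => _; [lra| exact/Rlt_le/E2_pos].
have := E1_thr hlam Ha; have := E2_thr (mu_of_pos _) Hb; lra.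
Qed.

End BDef.

Set Implicit Arguments. Unset Strict Implicit.

Definition zero k : bvec k := [ffun=> false].

Lemma encode_vadd n k (A : bmat n k) x x' :
  encode A (vadd x x') = vadd (encode A x) (encode A x').
Proof.
apply/ffunP => i; rewrite !ffunE -big_split /=; apply: eq_bigr => j _.
by rewrite ffunE andb_addr.
Qed.

Lemma vadd_xor n (y u w : bvec n) : vadd (vadd y u) (vadd u w) = vadd y w.
Proof. apply/ffunP => i; rewrite !ffunE; by case: (y i); case: (u i); case: (w i). Qed.

Lemma vadd_cancel n (x d : bvec n) : vadd x (vadd d x) = d.
Proof. apply/ffunP => i; rewrite !ffunE; by case: (x i); case: (d i). Qed.

Lemma vadd_eq n (x d : bvec n) : (vadd d x == x) = (d == zero n).
Proof.
apply/eqP/eqP => [H|->].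
  by rewrite -(vadd_cancel x d) H; apply/ffunP => i; rewrite !ffunE addbb.
by apply/ffunP => i; rewrite !ffunE.
Qed.

Lemma sum_shift k (x : bvec k) (h : bvec k -> R) :
  Rsum (fun x' => if x' == x then 0 else h (vadd x x'))
  = Rsum (fun d => if d == zero k then 0 else h d).
Proof.
rewrite -(sum_vadd x (fun x' => if x' == x then 0 else h (vadd x x'))).
by apply: Rsum_ext => d; rewrite vadd_eq vadd_cancel.
Qed.

Section Avg.
Variables (eps rho : R) (n k : nat) (lam muh mul T : R) (W0 : nat).
Hypothesis heps0 : 0 < eps.
Hypothesis heps1 : eps < 1.
Hypothesis hrho0 : 0 < rho.
Hypothesis hrho1 : rho < 1.
Hypothesis hlam : 0 < lam.
Hypothesis hmuh : 0 < muh.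
Hypothesis hmul : 0 < mul.

Local Notation mu_of := (mu_of muh mul W0).

Definition Fa (A : bmat n k) : R :=
  Rsum (fun e : bvec n => noise_prob eps e * (EE1 lam T e +
     Rsum (fun d => if d == zero k then 0 else EE2 (mu_of d) T (vadd e (encode A d))))).

Lemma inner_x (A : bmat n k) :
  Rsum (fun x => Rsum (fun y => joint eps A x y * Bfun lam muh mul T W0 A x y)) = Fa A.
Proof.
have Hx : forall x, Rsum (fun y => joint eps A x y * Bfun lam muh mul T W0 A x y) = / 2 ^ k * Fa A.
  move=> x; rewrite /Fa -Rsum_scal.
  rewrite -(sum_vadd (encode A x) (fun e => / 2 ^ k * (noise_prob eps e * (EE1 lam T e +
     Rsum (fun d => if d == zero k then 0 else EE2 (mu_of d) T (vadd e (encode A d))))))).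
  apply: Rsum_ext => y; rewrite /joint /Bfun.
  rewrite -(sum_shift x (fun d => EE2 (mu_of d) T (vadd (vadd y (encode A x)) (encode A d)))).
  rewrite Rmult_assoc; do 2 f_equal; congr (_ + _).
  apply: Rsum_ext => x'; case: eqP => // _.
  by rewrite encode_vadd vadd_xor.
rewrite (Rsum_ext Hx) Rsum_const card_bvec INR_exp2; field; apply: pow_nonzero; lra.
Qed.

Lemma mat_sum : Rsum (fun A : bmat n k => mat_prob rho A) = 1.
Proof.
rewrite /mat_prob (sum_ffun_prod (fun i b => bern rho b)).
rewrite -(Rprod_one ('I_n * 'I_k)%type) /Rprod; apply: eq_bigr => i _; exact: bern_sum.
Qed.

Lemma mat_prob_ge0 (A : bmat n k) : 0 <= mat_prob rho A.
Proof. apply: Rprod_ge0 => ij; exact/Rlt_le/bern_pos. Qed.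

Lemma avg_bound : 1 - avg_pc eps rho n k <= 2 * Rsum (fun A => mat_prob rho A * Fa A).
Proof.
rewrite -{1}mat_sum /avg_pc Rsum_minus -Rsum_scal; apply: Rsum_le => A.
rewrite -inner_x.
have := pc_bound heps0 heps1 A (B := Bfun lam muh mul T W0 A) (fun x y => Bfun_ge0 lam muh mul T W0 A x y)
  (fun y x1 x2 => Bfun_pair T W0 hlam hmuh hmul A y (x1:=x1) (x2:=x2)).
have := mat_prob_ge0 A; nra.
Qed.

Lemma Fa_split :
  Rsum (fun A => mat_prob rho A * Fa A) =
  Rsum (fun e : bvec n => noise_prob eps e * EE1 lam T e) +
  Rsum (fun d : bvec k => if d == zero k then 0 else
     Rsum (fun e : bvec n => noise_prob eps e *
        Rsum (fun A : bmat n k => mat_prob rho A * EE2 (mu_of d) T (vadd e (encode A d))))).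
Proof.
rewrite /Fa.
have HA : forall A : bmat n k, Rsum (fun e : bvec n => noise_prob eps e * (EE1 lam T e +
     Rsum (fun d => if d == zero k then 0 else EE2 (mu_of d) T (vadd e (encode A d))))) =
   Rsum (fun e : bvec n => noise_prob eps e * EE1 lam T e) +
   Rsum (fun d : bvec k => Rsum (fun e : bvec n => if d == zero k then 0 else
       noise_prob eps e * EE2 (mu_of d) T (vadd e (encode A d)))).
  move=> A; rewrite Rsum_swap -Rsum_plus; apply: Rsum_ext => e.
  rewrite Rmult_plus_distr_l -Rsum_scal; f_equal; apply: Rsum_ext => d.
  by case: eqP => _; ring.
rewrite (Rsum_ext (fun A => f_equal (Rmult (mat_prob rho A)) (HA A))).
rewrite (Rsum_ext (fun A => Rmult_plus_distr_l _ _ _)) Rsum_plus.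
rewrite (Rsum_ext (fun A => Rmult_comm _ _)) Rsum_scal mat_sum Rmult_1_r; f_equal.
rewrite (Rsum_ext (fun A => esym (Rsum_scal _ _))) Rsum_swap; apply: Rsum_ext => d.
case: eqP => _.
  by rewrite /Rsum big1 // => A _; rewrite big1 ?Rmult_0_r // => e _; ring.
rewrite (Rsum_ext (fun A => esym (Rsum_scal _ _))) Rsum_swap; apply: Rsum_ext => e.
rewrite -Rsum_scal; apply: Rsum_ext => A; ring.
Qed.

End Avg.

Set Implicit Arguments. Unset Strict Implicit.

Definition row n k (A : bmat n k) (i : 'I_n) : bvec k := [ffun j => A (i, j)].
Definition uncurry n k (F : {ffun 'I_n -> bvec k}) : bmat n k := [ffun p => F p.1 p.2].
Definition curry n k (A : bmat n k) : {ffun 'I_n -> bvec k} := [ffun i => row A i].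
Definition dot k (a d : bvec k) : bool := \big[addb/false]_(j : 'I_k) (a j && d j).
Definition sgn (b : bool) : R := if b then -1 else 1.

Lemma sum_rows n k (G : 'I_n -> bvec k -> R) :
  Rsum (fun A : bmat n k => Rprod (fun i => G i (row A i))) = Rprod (fun i => Rsum (G i)).
Proof.
rewrite -sum_ffun_prodT /Rsum (reindex (@uncurry n k)) /=.
  apply: eq_bigr => F _; rewrite /Rprod; apply: eq_bigr => i _; congr (G i _).
  by apply/ffunP => j; rewrite !ffunE.
exists (@curry n k) => [F _|A _]; apply/ffunP.
  by move=> i; apply/ffunP => j; rewrite !ffunE.
by case=> i j; rewrite !ffunE.
Qed.

Lemma mat_prob_rows rho n k (A : bmat n k) :
  mat_prob rho A = Rprod (fun i => Rprod (fun j => bern rho (row A i j))).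
Proof.
rewrite /mat_prob /Rprod pair_big /=; apply: eq_bigr => [[i j]] _.
by rewrite ffunE.
Qed.

Lemma encode_row n k (A : bmat n k) d i : encode A d i = dot (row A i) d.
Proof. rewrite ffunE /dot; apply: eq_bigr => j _; by rewrite ffunE. Qed.

Lemma phi_sgn m x : phi m x = (1 + m) / 2 + (1 - m) / 2 * sgn x.
Proof. case: x => /=; field. Qed.

Lemma sgn_addb x y : sgn (addb x y) = sgn x * sgn y.
Proof. case: x; case: y => /=; ring. Qed.

Lemma sgn_dot k (a d : bvec k) : sgn (dot a d) = Rprod (fun j => sgn (a j && d j)).
Proof. rewrite /dot /Rprod (big_morph sgn (id1:=1) sgn_addb) //. Qed.

Definition Psi rho m (b : bool) k (d : bvec k) : R :=
  (1 + m) / 2 + (1 - m) / 2 * sgn b * (1 - 2 * rho) ^ cnt d.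

Lemma row_sum rho m b k (d : bvec k) :
  Rsum (fun a : bvec k => Rprod (fun j => bern rho (a j)) * phi m (addb b (dot a d)))
  = Psi rho m b d.
Proof.
have E : forall a : bvec k, Rprod (fun j => bern rho (a j)) * phi m (addb b (dot a d)) =
   (1 + m) / 2 * Rprod (fun j => bern rho (a j)) +
   (1 - m) / 2 * sgn b * Rprod (fun j => bern rho (a j) * sgn (a j && d j)).
  by move=> a; rewrite phi_sgn sgn_addb sgn_dot Rprod_mult; ring.
rewrite (Rsum_ext E) Rsum_plus !Rsum_scal.
rewrite (sum_ffun_prod (fun j b => bern rho b)).
rewrite (sum_ffun_prod (fun j b => bern rho b * sgn (b && d j))).
rewrite /Psi -prod_if_cnt.
have -> : Rprod (fun i : 'I_k => bern rho true + bern rho false) = 1.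
  by rewrite -(Rprod_one 'I_k) /Rprod; apply: eq_bigr => i _; exact: bern_sum.
rewrite Rmult_1_r; do 2 f_equal; rewrite /Rprod; apply: eq_bigr => j _.
by case: (d j) => /=; ring.
Qed.

Lemma Rmult_swap3 a b c : a * (b * c) = b * (a * c).
Proof. ring. Qed.

Lemma sum_E1 eps n lam T :
  Rsum (fun e : bvec n => noise_prob eps e * EE1 lam T e)
  = exp (- lam * T) * (eps * exp lam + (1 - eps)) ^ n.
Proof.
have E : forall e : bvec n, noise_prob eps e * EE1 lam T e =
   exp (- lam * T) * Rprod (fun i => bern eps (e i) * (if e i then exp lam else 1)).
  by move=> e; rewrite /EE1 Rprod_mult /noise_prob Rmult_swap3.
rewrite (Rsum_ext E) Rsum_scal (sum_ffun_prod (fun i b => bern eps b * (if b then exp lam else 1))).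
rewrite -Rprod_const; f_equal; rewrite /Rprod; apply: eq_bigr => i _ /=; ring.
Qed.

Section E2sum.
Variables (eps rho mu T : R) (n k : nat) (d : bvec k).

Lemma sum_A_E2 (e : bvec n) :
  Rsum (fun A : bmat n k => mat_prob rho A * EE2 mu T (vadd e (encode A d)))
  = exp (mu * T) * Rprod (fun i => Psi rho (exp (- mu)) (e i) d).
Proof.
have E : forall A : bmat n k, mat_prob rho A * EE2 mu T (vadd e (encode A d)) =
  exp (mu * T) * Rprod (fun i => (fun (i : 'I_n) (a : bvec k) => Rprod (fun j => bern rho (a j)) *
                phi (exp (- mu)) (addb (e i) (dot a d))) i (row A i)).
  move=> A; rewrite /EE2 mat_prob_rows Rprod_mult /=.
  rewrite (_ : Rprod (fun i => phi (exp (- mu)) (vadd e (encode A d) i)) =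
     Rprod (fun i => phi (exp (- mu)) (addb (e i) (dot (row A i) d)))); first (rewrite Rmult_swap3 -Rmult_assoc; reflexivity).
  by rewrite /Rprod; apply: eq_bigr => i _; rewrite ffunE encode_row.
rewrite (Rsum_ext E) Rsum_scal (sum_rows (fun (i : 'I_n) (a : bvec k) => Rprod (fun j => bern rho (a j)) *
                phi (exp (- mu)) (addb (e i) (dot a d)))); f_equal.
by rewrite /Rprod; apply: eq_bigr => i _; rewrite row_sum.
Qed.

Definition Phi (m : R) : R :=
  (1 + m) / 2 + (1 - m) / 2 * (1 - 2 * eps) * (1 - 2 * rho) ^ cnt d.

Lemma sum_e_E2 :
  Rsum (fun e : bvec n => noise_prob eps e *
     Rsum (fun A : bmat n k => mat_prob rho A * EE2 mu T (vadd e (encode A d))))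
  = exp (mu * T) * Phi (exp (- mu)) ^ n.
Proof.
have E : forall e : bvec n, noise_prob eps e *
     Rsum (fun A : bmat n k => mat_prob rho A * EE2 mu T (vadd e (encode A d))) =
   exp (mu * T) * Rprod (fun i => bern eps (e i) * Psi rho (exp (- mu)) (e i) d).
  by move=> e; rewrite sum_A_E2 Rprod_mult /noise_prob Rmult_swap3.
rewrite (Rsum_ext E) Rsum_scal (sum_ffun_prod (fun i b => bern eps b * Psi rho (exp (- mu)) b d)).
rewrite -Rprod_const; f_equal; rewrite /Rprod; apply: eq_bigr => i _.
rewrite /Psi /Phi /=; ring.
Qed.

End E2sum.

Set Implicit Arguments. Unset Strict Implicit.

Lemma cnt0 k (d : bvec k) : cnt d = 0%N -> d = zero k.
Proof.
move=> /card0_eq H; apply/ffunP => j; rewrite ffunE.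
by have := H j; rewrite !inE /= => ->.
Qed.

Lemma pow_dec (x : R) (a b : nat) : 0 <= x <= 1 -> (a <= b)%N -> x ^ b <= x ^ a.
Proof.
move=> Hx Hab; rewrite -(subnKC Hab) -plusE pow_add.
have H1 : x ^ (b - a) <= 1 by rewrite -(pow1 (b - a)); apply: pow_incr; lra.
have H2 : 0 <= x ^ a by apply: pow_le; lra.
nra.
Qed.

Lemma Zpow_ge1 (Z : R) (w W0 : nat) : 1 <= Z -> (w <= W0)%N -> 1 <= Z ^ W0 * (/ Z) ^ w.
Proof.
move=> HZ Hw; rewrite -(subnKC Hw) -plusE pow_add -Rinv_pow; last lra.
have H0 : 0 < Z ^ w by apply: pow_lt; lra.
have H1 : 1 <= Z ^ (W0 - w) by apply: pow_R1_Rle.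
rewrite Rmult_comm -Rmult_assoc Rinv_l; lra.
Qed.

Section Main.
Variables (eps rho : R) (n k : nat) (lam muh mul T Z : R) (W0 : nat).
Hypothesis heps0 : 0 < eps.
Hypothesis heps1 : eps < 1 / 2.
Hypothesis hrho0 : 0 < rho.
Hypothesis hrho1 : rho < 1.
Hypothesis hlam : 0 < lam.
Hypothesis hmuh : 0 < muh.
Hypothesis hmul : 0 < mul.
Hypothesis hZ : 1 <= Z.

Let c := 1 - 2 * rho.
Definition Phihi := (1 + exp (- muh)) / 2 + (1 - exp (- muh)) / 2 * (1 - 2 * eps) * Rabs (1 - 2 * rho) ^ W0.
Definition Philo := (1 + exp (- mul)) / 2 + (1 - exp (- mul)) / 2 * (1 - 2 * eps) * Rabs (1 - 2 * rho).

Lemma exp_neg_lt1 mu : 0 < mu -> exp (- mu) < 1.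
Proof. move=> H; rewrite -exp_0; apply: exp_increasing; lra. Qed.

Lemma cpow_bounds (d : bvec k) : - 1 <= (1 - 2 * rho) ^ cnt d <= 1.
Proof.
have Hc : Rabs ((1 - 2 * rho) ^ cnt d) <= 1.
  rewrite -RPow_abs -[X in _ <= X](pow1 (cnt d)); apply: pow_incr; split; first exact: Rabs_pos.
  by apply: Rabs_le; lra.
by move: Hc; rewrite /Rabs; case: Rcase_abs => ? ?; lra.
Qed.

Lemma Phi_pos mu (d : bvec k) : 0 < mu -> 0 <= Phi eps rho d (exp (- mu)).
Proof.
move=> Hmu; rewrite /Phi.
have Hm := exp_neg_lt1 Hmu.
have Hm0 := exp_pos (- mu).
have [Hc1 Hc2] := cpow_bounds d.
have He : 0 <= 1 - 2 * eps <= 1 by lra.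
set C := (1 - 2 * rho) ^ cnt d in Hc1 Hc2 *.
have H1 : - 1 <= (1 - 2 * eps) * C by nra.
have H2 : (1 - exp (- mu)) / 2 * (1 - 2 * eps) * C >= - ((1 - exp (- mu)) / 2).
  rewrite Rmult_assoc; nra.
lra.
Qed.

Lemma Phi_le mu (d : bvec k) X : 0 < mu -> (1 - 2 * rho) ^ cnt d <= X ->
  Phi eps rho d (exp (- mu)) <= (1 + exp (- mu)) / 2 + (1 - exp (- mu)) / 2 * (1 - 2 * eps) * X.
Proof.
move=> Hmu HX; rewrite /Phi; apply: Rplus_le_compat_l.
apply: Rmult_le_compat_l => //.
have Hm := exp_neg_lt1 Hmu; apply: Rmult_le_pos; lra.
Qed.

Lemma Phihi_ge0 : 0 <= Phihi.
Proof.
have Hc1 : 0 <= Rabs (1 - 2 * rho) <= 1 by split; [exact: Rabs_pos| apply: Rabs_le; lra].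
  rewrite /Phihi; have := exp_neg_lt1 hmuh; have := exp_pos (- muh).
  move=> *; have : 0 <= (1 - exp (- muh)) / 2 * (1 - 2 * eps) by apply: Rmult_le_pos; lra.
  move=> H; have := Rmult_le_pos _ _ H (pow_le _ W0 (proj1 Hc1)); lra.
Qed.

Lemma Philo_ge0 : 0 <= Philo.
Proof.
have Hc1 : 0 <= Rabs (1 - 2 * rho) <= 1 by split; [exact: Rabs_pos| apply: Rabs_le; lra].
  rewrite /Philo; have := exp_neg_lt1 hmul; have := exp_pos (- mul).
  move=> *; have : 0 <= (1 - exp (- mul)) / 2 * (1 - 2 * eps) by apply: Rmult_le_pos; lra.
  move=> H; have := Rmult_le_pos _ _ H (proj1 Hc1); lra.
Qed.

Lemma term_bound (d : bvec k) : d <> zero k ->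
  exp (mu_of muh mul W0 d * T) * Phi eps rho d (exp (- mu_of muh mul W0 d)) ^ n <=
  exp (muh * T) * Phihi ^ n + exp (mul * T) * Philo ^ n * Z ^ W0 * (/ Z) ^ cnt d.
Proof.
move=> Hd.
have Hc1 : 0 <= Rabs (1 - 2 * rho) <= 1 by split; [exact: Rabs_pos| apply: Rabs_le; lra].
have Hcw : forall a, (a <= cnt d)%N -> (1 - 2 * rho) ^ cnt d <= Rabs (1 - 2 * rho) ^ a.
  by move=> a Ha; exact: (Rle_trans _ _ _ (pow_Rabs _ _) (pow_dec Hc1 Ha)).
have HZ0 : 0 < / Z by apply: Rinv_0_lt_compat; lra.
have Hhi0 := Phihi_ge0.
have Hlo0 := Philo_ge0.
have Hpos1 : 0 <= exp (muh * T) * Phihi ^ n.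
  by apply: Rmult_le_pos; [exact/Rlt_le/exp_pos| apply: pow_le].
have Hpos2 : 0 <= exp (mul * T) * Philo ^ n * Z ^ W0 * (/ Z) ^ cnt d.
  apply: Rmult_le_pos; last by apply: pow_le; lra.
  apply: Rmult_le_pos; last by apply: pow_le; lra.
  by apply: Rmult_le_pos; [exact/Rlt_le/exp_pos| apply: pow_le].
rewrite /mu_of; case: leqP => HW.
- suff : exp (muh * T) * Phi eps rho d (exp (- muh)) ^ n <= exp (muh * T) * Phihi ^ n by lra.
  apply: Rmult_le_compat_l; first exact/Rlt_le/exp_pos.
  apply: pow_incr; split; first exact: Phi_pos.
  exact: Phi_le hmuh (Hcw _ HW).
- have Hw1 : (1 <= cnt d)%N.
    by rewrite lt0n; apply/eqP => /cnt0.
  have HZ1 := Zpow_ge1 hZ (ltnW HW).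
  have H1 : exp (mul * T) * Phi eps rho d (exp (- mul)) ^ n <= exp (mul * T) * Philo ^ n.
    apply: Rmult_le_compat_l; first exact/Rlt_le/exp_pos.
    apply: pow_incr; split; first exact: Phi_pos.
    by have := Phi_le hmul (Rle_trans _ _ _ (Hcw _ Hw1) (Req_le _ _ (pow_1 _))).
  have H0 : 0 <= exp (mul * T) * Philo ^ n.
    by apply: Rmult_le_pos; [exact/Rlt_le/exp_pos| apply: pow_le].
  have H2 : exp (mul * T) * Philo ^ n <= exp (mul * T) * Philo ^ n * Z ^ W0 * (/ Z) ^ cnt d.
    rewrite (Rmult_assoc (exp (mul * T) * Philo ^ n)); nra.
  lra.
Qed.

Lemma sum_invZ : Rsum (fun d : bvec k => (/ Z) ^ cnt d) = (1 + / Z) ^ k.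
Proof.
rewrite (Rsum_ext (fun d => esym (prod_if_cnt d (/ Z)))).
rewrite (sum_ffun_prod (fun j b => if b then / Z else 1)) -Rprod_const.
by rewrite /Rprod; apply: eq_bigr => j _; rewrite Rplus_comm.
Qed.

Lemma finite_bound :
  1 - avg_pc eps rho n k <=
  2 * (exp (- lam * T) * (eps * exp lam + (1 - eps)) ^ n +
       INR (2 ^ k) * (exp (muh * T) * Phihi ^ n) +
       exp (mul * T) * Philo ^ n * Z ^ W0 * (1 + / Z) ^ k).
Proof.
have heps1' : eps < 1 by lra.
apply: Rle_trans (avg_bound n k T W0 heps0 heps1' hrho0 hrho1 hlam hmuh hmul) _.
rewrite Fa_split sum_E1 !Rplus_assoc; apply: Rmult_le_compat_l; first lra.
apply: Rplus_le_compat_l.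
set X := exp (muh * T) * Phihi ^ n.
set Y := exp (mul * T) * Philo ^ n * Z ^ W0.
have HX : 0 <= X.
  by apply: Rmult_le_pos; [exact/Rlt_le/exp_pos| apply: pow_le; exact: Phihi_ge0].
have HY : 0 <= Y.
  apply: Rmult_le_pos; last by apply: pow_le; lra.
  by apply: Rmult_le_pos; [exact/Rlt_le/exp_pos| apply: pow_le; exact: Philo_ge0].
apply: (Rle_trans _ (Rsum (fun d : bvec k => X + Y * (/ Z) ^ cnt d))).
  apply: Rsum_le => d; case: eqP => Hd.
    have : 0 <= (/ Z) ^ cnt d by apply: pow_le; apply/Rlt_le/Rinv_0_lt_compat; lra.
    nra.
  rewrite (sum_e_E2 eps rho (mu_of muh mul W0 d) T n d).
  exact: term_bound.
rewrite Rsum_plus Rsum_const card_bvec Rsum_scal sum_invZ; lra.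
Qed.

End Main.

Unset Implicit Arguments.

Lemma ln_le_sub1 x : 0 < x -> ln x <= x - 1.
Proof. move=> H. have := exp_ineq1_le (ln x). rewrite exp_ln //. lra. Qed.

Lemma ln_lt_sub1 x : 0 < x -> x <> 1 -> ln x < x - 1.
Proof.
move=> H H1. have : ln x <> 0.
  move=> E; apply: H1; by rewrite -(exp_ln x H) E exp_0.
move=> /exp_ineq1; rewrite exp_ln //; lra.
Qed.

Lemma ln_div2 a b : 0 < a -> 0 < b -> ln (a / b) = ln a - ln b.
Proof. move=> Ha Hb; rewrite /Rdiv ln_mult ?ln_Rinv //; try lra; exact: Rinv_0_lt_compat. Qed.

Lemma ln_frac4 a b c d : 0 < a -> 0 < b -> 0 < c -> 0 < d ->
  ln (a * b / (c * d)) = ln a + ln b - ln c - ln d.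
Proof.
move=> Ha Hb Hc Hd; rewrite ln_div2; try nra.
rewrite !ln_mult //; lra.
Qed.

Lemma gibbs p t : 0 < p < 1 -> 0 < t < 1 ->
  t * ln p + (1 - t) * ln (1 - p) <= t * ln t + (1 - t) * ln (1 - t).
Proof.
move=> Hp Ht.
have H1 := ln_le_sub1 (p / t) ltac:(apply: Rdiv_lt_0_compat; lra).
have H2 := ln_le_sub1 ((1 - p) / (1 - t)) ltac:(apply: Rdiv_lt_0_compat; lra).
rewrite !ln_div2 in H1 H2; try lra.
have E1 : t * (p / t - 1) = p - t by field; lra.
have E2 : (1 - t) * ((1 - p) / (1 - t) - 1) = t - p by field; lra.
have := Rmult_le_compat_l t _ _ ltac:(lra) H1.
have := Rmult_le_compat_l (1 - t) _ _ ltac:(lra) H2.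
lra.
Qed.

Lemma gibbs_strict p t : 0 < p < 1 -> 0 < t < 1 -> p <> t ->
  t * ln p + (1 - t) * ln (1 - p) < t * ln t + (1 - t) * ln (1 - t).
Proof.
move=> Hp Ht Hne.
have H1 := ln_lt_sub1 (p / t) ltac:(apply: Rdiv_lt_0_compat; lra).
have H2 := ln_le_sub1 ((1 - p) / (1 - t)) ltac:(apply: Rdiv_lt_0_compat; lra).
have Hne' : p / t <> 1.
  move=> E; apply: Hne; have : p = p / t * t by field; lra.
  move=> ->; rewrite E; ring.
have {}H1 := H1 Hne'.
rewrite !ln_div2 in H1 H2; try lra.
have E1 : t * (p / t - 1) = p - t by field; lra.
have E2 : (1 - t) * ((1 - p) / (1 - t) - 1) = t - p by field; lra.
have := Rmult_lt_compat_l t _ _ ltac:(lra) H1.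
have := Rmult_le_compat_l (1 - t) _ _ ltac:(lra) H2.
lra.
Qed.

Lemma chernoff p t : 0 < p < 1 -> 0 < t < 1 -> p <> t ->
  exp (- t * ln (t * (1 - p) / (p * (1 - t)))) *
    (1 - p + p * (t * (1 - p) / (p * (1 - t)))) < 1.
Proof.
move=> Hp Ht Hne.
have E : 1 - p + p * (t * (1 - p) / (p * (1 - t))) = exp (ln (1 - p) - ln (1 - t)).
  rewrite exp_plus exp_Ropp !exp_ln; try lra; field; lra.
rewrite E -exp_plus ln_frac4; try lra.
rewrite -[X in _ < X]exp_0; apply: exp_increasing.
have := gibbs_strict p t Hp Ht Hne; nra.
Qed.

Set Implicit Arguments. Unset Strict Implicit.

Lemma limit_from_bound (u : nat -> R) a b g K :
  0 <= a < 1 -> 0 <= b < 1 -> 0 <= g < 1 -> 0 <= K ->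
  (forall n, u n <= 1) ->
  (forall n, 1 - u n <= 2 * (a ^ n + b ^ n + K * g ^ n)) -> Un_cv u 1.
Proof.
move=> Ha Hb Hg HK Hu Hb1 e He.
set y := e / (2 * (2 + K)).
have Hy : 0 < y by rewrite /y; apply: Rdiv_lt_0_compat; lra.
have Habs : forall x, 0 <= x < 1 -> Rabs x < 1 by move=> x Hx; rewrite Rabs_pos_eq; lra.
have [N1 H1] := pow_lt_1_zero a (Habs _ Ha) y Hy.
have [N2 H2] := pow_lt_1_zero b (Habs _ Hb) y Hy.
have [N3 H3] := pow_lt_1_zero g (Habs _ Hg) y Hy.
exists (maxn N1 (maxn N2 N3)) => n Hn.
have Hn1 : (n >= N1)%coq_nat by apply/leP; apply: leq_trans (leq_maxl _ _) (introT leP Hn).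
have Hn2 : (n >= N2)%coq_nat.
  by apply/leP; apply: leq_trans (leq_trans (leq_maxl _ _) (leq_maxr _ _)) (introT leP Hn).
have Hn3 : (n >= N3)%coq_nat.
  by apply/leP; apply: leq_trans (leq_trans (leq_maxr _ _) (leq_maxr _ _)) (introT leP Hn).
have := H1 n Hn1; have := H2 n Hn2; have := H3 n Hn3.
rewrite !Rabs_pos_eq; try (apply: pow_le; lra).
move=> G3 G2 G1.
rewrite /R_dist Rabs_left1; last by have := Hu n; lra.
have := Hb1 n.
have E : 2 * (y + y + K * y) = e by rewrite /y; field; lra.
have : K * g ^ n <= K * y by apply: Rmult_le_compat_l; lra.
lra.
Qed.

Lemma kfloor_le Rt n : 0 <= Rt -> INR (kfloor Rt n) <= Rt * INR n.
Proof.
move=> HR; rewrite /kfloor.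
have HRn : 0 <= Rt * INR n by apply: Rmult_le_pos => //; apply: pos_INR.
have [H _] := base_Int_part (Rt * INR n).
case E: (Int_part (Rt * INR n)) H => [|p|p] H //=.
by rewrite INR_IZR_INZ positive_nat_Z.
Qed.

Lemma exp_le_mono x y : x <= y -> exp x <= exp y.
Proof.
move=> H; case: (Rle_lt_or_eq_dec _ _ H) => [/exp_increasing|->]; lra.
Qed.

Lemma pc_le1 eps n k (A : bmat n k) : 0 < eps -> eps < 1 -> p_c eps A <= 1.
Proof.
move=> H0 H1; rewrite -(joint_total eps A) /p_c; apply: Rsum_le => x; apply: Rsum_le => y.
have Hj := joint_ge0 H0 H1 A x y.
have Ho := out_pos H0 H1 A y.
have Hjo : joint eps A x y <= out_prob eps A y.
  by apply: (Rsum_term_le x (f := fun x => joint eps A x y)) => x'; exact: joint_ge0.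
have : posterior eps A x y <= 1.
  rewrite /posterior; apply: (Rmult_le_reg_r (out_prob eps A y)) => //.
  rewrite /Rdiv Rmult_assoc Rinv_l; lra.
nra.
Qed.

Lemma avg_le1 eps rho n k : 0 < eps -> eps < 1 -> 0 < rho -> rho < 1 ->
  avg_pc eps rho n k <= 1.
Proof.
move=> H0 H1 H2 H3; rewrite -(mat_sum rho n k) /avg_pc; apply: Rsum_le => A.
have := pc_le1 A H0 H1; have := mat_prob_ge0 H2 H3 A; nra.
Qed.

Lemma exp_mul_pow x t n : exp (x * (t * INR n)) = exp (x * t) ^ n.
Proof. by rewrite exp_pow_nat; f_equal; ring. Qed.

Lemma bound_n eps rho Rt n lam muh mul Z W0 tau :
  0 < eps -> eps < 1 / 2 -> 0 < rho -> rho < 1 -> 0 < lam -> 0 < muh -> 0 < mul ->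
  1 <= Z -> 0 <= Rt ->
  1 - avg_pc eps rho n (kfloor Rt n) <=
  2 * ((exp (- lam * tau) * (eps * exp lam + (1 - eps))) ^ n +
       (exp (Rt * ln 2) * exp (muh * tau) * Phihi eps rho muh W0) ^ n +
       Z ^ W0 * (exp (Rt / Z) * (exp (mul * tau) * Philo eps rho mul)) ^ n).
Proof.
move=> He0 He1 Hr0 Hr1 Hl Hmh Hml HZ HR.
set k := kfloor Rt n.
have Hk := kfloor_le n HR; rewrite -/k in Hk.
apply: Rle_trans (finite_bound n k (tau * INR n) W0 He0 He1 Hr0 Hr1 Hl Hmh Hml HZ) _.
apply: Rmult_le_compat_l; first lra.
have Hhi := Phihi_ge0 W0 He0 He1 Hr0 Hr1 Hmh.
have Hlo := Philo_ge0 He0 He1 Hr0 Hr1 Hml.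
have Hln2 : 0 < ln 2 by have := ln_lt_2; lra.
apply: Rplus_le_compat; first apply: Rplus_le_compat.
- rewrite Rpow_mult_distr -exp_mul_pow; apply: Req_le; do 2 f_equal; ring.
- rewrite !Rpow_mult_distr -!exp_mul_pow -Rmult_assoc; apply: Rmult_le_compat_r.
    by apply: pow_le.
  apply: Rmult_le_compat_r; first exact/Rlt_le/exp_pos.
  rewrite INR_exp2 -{1}(exp_ln 2) ?exp_pow_nat; last lra.
  apply: exp_le_mono; nra.
- rewrite (Rmult_comm (Z ^ W0)) !Rpow_mult_distr exp_mul_pow.
  have H1 : (1 + / Z) ^ k <= exp (Rt / Z) ^ n.
    apply: Rle_trans (_ : exp (/ Z) ^ k <= _).
      apply: pow_incr; split; last exact: exp_ineq1_le.
      have : 0 < / Z by apply: Rinv_0_lt_compat; lra.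
      lra.
    rewrite !exp_pow_nat; apply: exp_le_mono.
    have : 0 < / Z by apply: Rinv_0_lt_compat; lra.
    rewrite /Rdiv; nra.
  have H2 : 0 <= exp (mul * (tau * INR n)) * Philo eps rho mul ^ n * Z ^ W0.
    apply: Rmult_le_pos; last by apply: pow_le; lra.
    by apply: Rmult_le_pos; [exact/Rlt_le/exp_pos| apply: pow_le].
  rewrite exp_mul_pow in H2.
  have := Rmult_le_compat_l _ _ _ H2 H1.
  move=> H; apply: Rle_trans H _; apply: Req_le; ring.
Qed.

Lemma ln2_pos : 0 < ln 2.
Proof. have := ln_lt_2; lra. Qed.

Lemma h2_bound eps t : 0 < eps < 1 -> 0 < t < 1 ->
  h2 t <= h2 eps + (t - eps) * (ln (1 - eps) - ln eps) / ln 2.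
Proof.
move=> He Ht.
have Hl := ln2_pos.
have E : h2 eps + (t - eps) * (ln (1 - eps) - ln eps) / ln 2 - h2 t =
   (t * ln t + (1 - t) * ln (1 - t) - (t * ln eps + (1 - t) * ln (1 - eps))) / ln 2.
  rewrite /h2 /log2; field; lra.
have G := gibbs eps t He Ht.
have : 0 <= (t * ln t + (1 - t) * ln (1 - t) - (t * ln eps + (1 - t) * ln (1 - eps))) / ln 2.
  apply: Rmult_le_pos; first lra.
  by apply/Rlt_le/Rinv_0_lt_compat.
lra.
Qed.

Lemma tau_exists eps Rt plo : 0 < eps -> eps < plo -> plo <= 1 / 2 ->
  Rt < capacity eps -> exists tau, eps < tau /\ tau < plo /\ Rt < capacity tau.
Proof.
move=> He Hp Hp2 HR.
have Hl := ln2_pos.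
set L := ln (1 - eps) - ln eps.
have HL : 0 < L by rewrite /L; have := ln_increasing eps (1 - eps) He ltac:(lra); lra.
set gap := capacity eps - Rt.
have Hg : 0 < gap by rewrite /gap; lra.
set d := Rmin (gap * ln 2 / (2 * L)) ((plo - eps) / 2).
have Hd0 : 0 < d.
  apply: Rmin_glb_lt; last lra.
  apply: Rdiv_lt_0_compat; nra.
have Hd1 := Rmin_l (gap * ln 2 / (2 * L)) ((plo - eps) / 2).
have Hd2 := Rmin_r (gap * ln 2 / (2 * L)) ((plo - eps) / 2).
rewrite -/d in Hd1 Hd2.
exists (eps + d); split; first lra; split; first lra.
have He1 : eps < 1 by lra.
have Ht0 : 0 < eps + d by lra.
have Ht1 : eps + d < 1 by lra.
have Hb := h2_bound (conj He He1) (conj Ht0 Ht1).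
have : (eps + d - eps) * L / ln 2 <= gap / 2.
  have -> : (eps + d - eps) * L / ln 2 = d * (L / ln 2) by field; lra.
  have E : gap / 2 = (gap * ln 2 / (2 * L)) * (L / ln 2) by field; lra.
  rewrite E; apply: Rmult_le_compat_r => //.
  by apply/Rlt_le/Rdiv_lt_0_compat.
move: Hb; rewrite /capacity /gap -/L /capacity in Hg *; lra.
Qed.

Lemma beta_eq Rt t : 0 < t < 1 ->
  exp (Rt * ln 2) * exp (- ln (t / (1 - t)) * t) * ((1 + t / (1 - t)) / 2) =
  exp (ln 2 * (Rt - 1 + h2 t)).
Proof.
move=> Ht.
have Hl := ln2_pos.
have E : (1 + t / (1 - t)) / 2 = exp (- (ln 2 + ln (1 - t))).
  rewrite exp_Ropp exp_plus !exp_ln; try lra; field; lra.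
rewrite E -!exp_plus ln_div2; try lra; f_equal.
rewrite /h2 /log2; field; lra.
Qed.

Unset Implicit Arguments.

Theorem theorem2 (eps Rt rho : R)
  (heps0 : 0 < eps) (heps1 : eps < 1 / 2)
  (hR0 : 0 < Rt) (hRC : Rt < capacity eps)
  (hrho0 : 0 < rho) (hrho1 : rho < 1) :
  Un_cv (fun n : nat => avg_pc eps rho n (kfloor Rt n)) 1.
Proof.
have Hl2 := ln2_pos.
have Hac : 0 <= Rabs (1 - 2 * rho) < 1.
  split; first exact: Rabs_pos.
  rewrite /Rabs; case: Rcase_abs => _; lra.
set ac := Rabs (1 - 2 * rho) in Hac.
have Hplo1 : eps < (1 - ac * (1 - 2 * eps)) / 2 by nra.
have Hplo2 : (1 - ac * (1 - 2 * eps)) / 2 <= 1 / 2 by nra.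
have [tau [Ht1 [Ht2 HtR]]] := tau_exists heps0 Hplo1 Hplo2 hRC.
set plo := (1 - ac * (1 - 2 * eps)) / 2 in Hplo1 Hplo2 Ht2.
have Htau : 0 < tau < 1 by lra.
have Heps : 0 < eps < 1 by lra.
have Hplo : 0 < plo < 1 by lra.
have Hch1 := chernoff eps tau Heps Htau ltac:(lra).
set Ma := tau * (1 - eps) / (eps * (1 - tau)) in Hch1.
have HMa : 1 < Ma.
  rewrite /Ma; apply/(Rmult_lt_reg_r (eps * (1 - tau))); first nra.
  rewrite /Rdiv Rmult_assoc Rinv_l; nra.
have Hlam : 0 < ln Ma by rewrite -ln_1; apply: ln_increasing; lra.
set mh := tau / (1 - tau).
have Hmh : 0 < mh < 1.
  rewrite /mh; split; first by apply: Rdiv_lt_0_compat; lra.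
  apply/(Rmult_lt_reg_r (1 - tau)); first lra.
  rewrite /Rdiv Rmult_assoc Rinv_l; lra.
have Hmuh : 0 < - ln mh.
  have : ln mh < ln 1 by apply: ln_increasing; lra.
  rewrite ln_1; lra.
have Hch2 := chernoff plo tau Hplo Htau ltac:(lra).
set Ml := tau * (1 - plo) / (plo * (1 - tau)) in Hch2.
have HMl : 0 < Ml < 1.
  rewrite /Ml; split; first by apply: Rdiv_lt_0_compat; nra.
  apply/(Rmult_lt_reg_r (plo * (1 - tau))); first nra.
  rewrite /Rdiv Rmult_assoc Rinv_l; nra.
have Hmul : 0 < - ln Ml.
  have : ln Ml < ln 1 by apply: ln_increasing; lra.
  rewrite ln_1; lra.
have Ha : 0 <= exp (- ln Ma * tau) * (eps * exp (ln Ma) + (1 - eps)) < 1.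
  rewrite exp_ln; last lra.
  split; first by apply: Rmult_le_pos; [exact/Rlt_le/exp_pos| nra].
  rewrite (_ : - ln Ma * tau = - tau * ln Ma); last ring.
  by rewrite (_ : eps * Ma + (1 - eps) = 1 - eps + eps * Ma); last ring.
have Hbeta := beta_eq Rt Htau.
rewrite -/mh in Hbeta.
set E := exp (Rt * ln 2) * exp (- ln mh * tau).
have HE : 0 < E by rewrite /E; apply: Rmult_lt_0_compat; apply: exp_pos.
have Hbl : E * ((1 + mh) / 2) < 1.
  rewrite /E Hbeta -[X in _ < X]exp_0; apply: exp_increasing.
  move: HtR; rewrite /capacity => HtR; nra.
set y := (1 - E * ((1 + mh) / 2)) / (2 * E).
have Hy : 0 < y by rewrite /y; apply: Rdiv_lt_0_compat; lra.
have [W0 HW0] := pow_lt_1_zero ac ltac:(rewrite Rabs_pos_eq; lra) y Hy.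
have HW0' := HW0 W0 (le_n _).
rewrite Rabs_pos_eq in HW0'; last by apply: pow_le; lra.
have Hb : 0 <= exp (Rt * ln 2) * exp (- ln mh * tau) * Phihi eps rho (- ln mh) W0 < 1.
  rewrite /Phihi Ropp_involutive exp_ln; last lra.
  rewrite -/ac -/E.
  have Hcw : 0 <= ac ^ W0 by apply: pow_le; lra.
  have Hq : 0 <= (1 - mh) / 2 * (1 - 2 * eps) <= 1 / 2 by split; nra.
  set q := (1 - mh) / 2 * (1 - 2 * eps) in Hq *.
  have H1 : q * ac ^ W0 <= 1 / 2 * y by nra.
  have H2 : E * (1 / 2 * y) = (1 - E * ((1 + mh) / 2)) / 4 by rewrite /y; field; lra.
  have H3 : 0 <= E * (q * ac ^ W0) <= E * (1 / 2 * y) by split; nra.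
  split; first (apply: Rmult_le_pos; nra).
  rewrite Rmult_plus_distr_l; lra.
have HPl : Philo eps rho (- ln Ml) = 1 - plo + plo * Ml.
  rewrite /Philo Ropp_involutive exp_ln; last lra.
  rewrite -/ac /plo; field.
set g0 := exp (- ln Ml * tau) * Philo eps rho (- ln Ml).
have Hg0 : 0 < g0 < 1.
  rewrite /g0 HPl; split.
    by apply: Rmult_lt_0_compat; [exact: exp_pos| nra].
  by rewrite (_ : - ln Ml * tau = - tau * ln Ml); last ring.
have Hlg0 : ln g0 < 0 by rewrite -ln_1; apply: ln_increasing; lra.
set Z := 1 + Rt / (- ln g0).
have HZ0 : 0 < Rt / (- ln g0) by apply: Rdiv_lt_0_compat; lra.
have HZ : 1 <= Z by rewrite /Z; lra.
have Hg : 0 <= exp (Rt / Z) * g0 < 1.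
  split; first by apply: Rmult_le_pos; [exact/Rlt_le/exp_pos| lra].
  rewrite -{1}(exp_ln g0); last lra.
  rewrite -exp_plus -[X in _ < X]exp_0; apply: exp_increasing.
  have : Rt / Z < - ln g0.
    apply/(Rmult_lt_reg_r Z); first lra.
    rewrite /Rdiv Rmult_assoc Rinv_l; last lra.
    rewrite /Z Rmult_plus_distr_l Rmult_1_r; field_simplify; lra.
  lra.
apply: (limit_from_bound (a := exp (- ln Ma * tau) * (eps * exp (ln Ma) + (1 - eps)))
   (b := exp (Rt * ln 2) * exp (- ln mh * tau) * Phihi eps rho (- ln mh) W0)
   (g := exp (Rt / Z) * g0) (K := Z ^ W0)) => //.
- by apply: pow_le; lra.
- move=> n; apply: avg_le1; lra.
- move=> n.
  exact: (bound_n n W0 tau heps0 heps1 hrho0 hrho1 Hlam Hmuh Hmul HZ (Rlt_le _ _ hR0)).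
Qed.
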